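(* Let $\mathcal{X}$ be a pospace. Then the trace poset $\overrightarrow{T}\mathcal{X}$ (the set of traces of $\mathcal{X}$ ordered by $f\leq g$ iff $g=u\star f\star v$ for some traces $u,v$), regarded as a category, is isomorphic to the factorization category $F\overrightarrow{P}(\mathcal{X})$ of the trace category of $\mathcal{X}$.
   Context: A pospace is a Hausdorff space $X$ with a partial order closed in $X\times X$, regarded as a directed space whose dipaths are the continuous order-preserving maps $[0,1]\to X$. A trace is a dipath modulo monotone (continuous, endpoint-preserving) reparametrization; $\star$ is concatenation of traces. The trace category $\overrightarrow{P}(\mathcal{X})$ has objects the points of $X$ and morphisms the traces, composed by concatenation. For a category $\mathcal{C}$, the factorization category $F\mathcal{C}$ has objects the morphisms of $\mathcal{C}$, a morphism from $f$ to $f'$ being a pair $(u,v)$ of morphisms of $\mathcal{C}$ with $ufv=f'$, with composition $(u,v)(u',v')=(u'u,vv')$ and identities $(1_x,1_y)$. A poset is viewed as a category with exactly one morphism $a\to b$ iff $a\le b$. *)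

(* Defs.v *)
From HB Require Import structures.
From mathcomp Require Import all_boot all_order all_algebra all_classical all_reals all_analysis.
From mathcomp Require Import Rstruct Rstruct_topology.
From Stdlib Require Import Relations.
From mathcomp Require Import lra.

Set Implicit Arguments.
Unset Strict Implicit.
Unset Printing Implicit Defensive.
Import Order.TTheory GRing.Theory Num.Theory.
Local Open Scope classical_set_scope.
Local Open Scope ring_scope.

Notation RR := Rdefinitions.R.

Record cat := Cat {
  ob : Type;
  hom : ob -> ob -> Type;
  idm : forall a, hom a a;
  (* comp g f = "g after f" *)
  comp : forall a b c, hom b c -> hom a b -> hom a c }.
Arguments idm {_} _.
Arguments comp {_ _ _ _} _ _.

Definition cat_laws (C : cat) : Prop :=
  [/\ (forall (a b : ob C) (f : hom a b), comp (idm b) f = f),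
      (forall (a b : ob C) (f : hom a b), comp f (idm a) = f) &
      (forall (a b c d : ob C) (h : hom c d) (g : hom b c) (f : hom a b),
          comp h (comp g f) = comp (comp h g) f)].

Definition cat_iso (C D : cat) : Prop :=
  exists (Fo : ob C -> ob D) (Fm : forall a b, hom a b -> hom (Fo a) (Fo b)),
    [/\ (forall a : ob C, Fm a a (idm a) = idm (Fo a)),
        (forall (a b c : ob C) (g : hom b c) (f : hom a b),
            Fm a c (comp g f) = comp (Fm b c g) (Fm a b f)),
        bijective Fo &
        (forall a b : ob C, bijective (Fm a b))].

(* A preorder regarded as a category: exactly one morphism a -> b iff a <= b *)
(* (morphisms are proofs of a <= b; unique by proof irrelevance).          *)
Definition thin_cat (A : Type) (le : A -> A -> Prop)
  (Hr : forall a, le a a) (Ht : forall a b c, le a b -> le b c -> le a c) : cat :=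
  @Cat A le Hr (fun a b c (g : le b c) (f : le a b) => Ht a b c f g).

Definition arrow (C : cat) := {a : ob C & {b : ob C & hom a b}}.
Definition asrc C (f : arrow C) : ob C := projT1 f.
Definition atgt C (f : arrow C) : ob C := projT1 (projT2 f).
Definition aarr C (f : arrow C) : hom (asrc f) (atgt f) := projT2 (projT2 f).

Definition fhom (C : cat) (f f' : arrow C) : Type :=
  {uv : hom (atgt f) (atgt f') * hom (asrc f') (asrc f) |
     comp uv.1 (comp (aarr f) uv.2) = aarr f'}.

Section FactCat.
Variables (C : cat) (HL : cat_laws C).

Definition fidm (f : arrow C) : fhom f f.
Proof.
exists (idm (atgt f), idm (asrc f)) => /=.
by case: HL => H1 H2 _; rewrite H2 H1.
Defined.

Definition fcomp (f f' f'' : arrow C) (G : fhom f' f'') (H : fhom f f') : fhom f f''.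
Proof.
case: G => [[u v] /= Euv]; case: H => [[u' v'] /= Eu'v'].
exists (comp u u', comp v' v) => /=.
case: HL => _ _ A.
by rewrite -A -Euv -Eu'v' !A.
Defined.

Definition fact_cat : cat := @Cat (arrow C) (@fhom C) fidm fcomp.
End FactCat.

Definition is_pospace (T : topologicalType) (le : T -> T -> Prop) : Prop :=
  [/\ hausdorff_space T,
      (forall x, le x x),
      (forall x y z, le x y -> le y z -> le x z),
      (forall x y, le x y -> le y x -> x = y) &
      closed [set xy : T * T | le xy.1 xy.2]].

Section Traces.
Variables (T : topologicalType) (le : T -> T -> Prop).

(* a dipath: a continuous order-preserving map [0,1] -> X (represented by *)
(* a function RR -> T; only its values on [0,1] matter)                  *)
Definition dipath (p : RR -> T) : Prop :=
  {within `[0, 1], continuous p} /\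
  (forall s t : RR, 0 <= s -> s <= t -> t <= 1 -> le (p s) (p t)).

Definition reparam_map (phi : RR -> RR) : Prop :=
  [/\ {within `[0, 1], continuous phi}, phi 0 = 0, phi 1 = 1 &
      (forall s t : RR, 0 <= s -> s <= t -> t <= 1 -> phi s <= phi t)].

Definition reparam_step (p q : RR -> T) : Prop :=
  dipath p /\ dipath q /\
  exists phi, reparam_map phi /\ (forall t : RR, 0 <= t -> t <= 1 -> q t = p (phi t)).

Definition trace_equiv : (RR -> T) -> (RR -> T) -> Prop :=
  clos_refl_sym_trans (RR -> T) reparam_step.

Definition tclass (x y : T) (p : RR -> T) : set (RR -> T) :=
  [set q | [/\ dipath q, q 0 = x, q 1 = y & trace_equiv p q]].

Definition Trace (x y : T) : Type :=
  {S : set (RR -> T) | exists p, [/\ dipath p, p 0 = x, p 1 = y & S = tclass x y p]}.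

Definition trep x y (f : Trace x y) : RR -> T := projT1 (cid (svalP f)).
Lemma trepP x y (f : Trace x y) :
  [/\ dipath (trep f), trep f 0 = x, trep f 1 = y & sval f = tclass x y (trep f)].
Proof. exact: (projT2 (cid (svalP f))). Qed.

Definition pconcat (p q : RR -> T) : RR -> T :=
  fun t => if t <= 2^-1 then p (2 * t) else q (2 * t - 1).
Definition cstp (x : T) : RR -> T := fun _ => x.

(* closure facts needed for the trace category to be well-typed *)
Definition dipath_closure : Prop :=
  (forall x, dipath (cstp x)) /\
  (forall p q, dipath p -> dipath q -> p 1 = q 0 -> dipath (pconcat p q)).

Lemma pconcat0 p q : pconcat p q 0 = p 0.
Proof. by rewrite /pconcat invr_ge0 ler0n mulr0. Qed.
Lemma pconcat1 p q : pconcat p q 1 = q 1.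
Proof.
rewrite /pconcat ifF; first by rewrite mulr1 (_ : 2 - 1 = 1) //; lra.
by apply/negbTE; rewrite -ltNge; lra.
Qed.

Variable Hc : dipath_closure.

Definition tid (x : T) : Trace x x.
Proof.
exists (tclass x x (cstp x)); exists (cstp x); split => //.
exact: Hc.1.
Defined.

(* trace concatenation f * g, written categorically as  tcomp g f *)
Definition tcomp (x y z : T) (g : Trace y z) (f : Trace x y) : Trace x z.
Proof.
exists (tclass x z (pconcat (trep f) (trep g))).
exists (pconcat (trep f) (trep g)).
case: (trepP f) => Hf f0 f1 _; case: (trepP g) => Hg g0 g1 _.
split => //; last by rewrite pconcat1.
  by apply: Hc.2 => //; rewrite f1 g0.
by rewrite pconcat0.
Defined.

Definition trace_cat : cat := @Cat T Trace tid tcomp.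

Definition trace := arrow trace_cat.

Definition trace_le (f g : trace) : Prop :=
  exists (x' y' : T) (u : Trace x' (asrc f)) (v : Trace (atgt f) y'),
    g = existT _ x' (existT _ y' (tcomp v (tcomp (aarr f) u))).

End Traces.

(* Main.v *)
Require Import Defs.
From HB Require Import structures.
From mathcomp Require Import all_boot all_order all_algebra all_classical all_reals all_analysis.
From mathcomp Require Import Rstruct Rstruct_topology.
From Stdlib Require Import Relations.
From mathcomp Require Import ring lra.

Set Implicit Arguments.
Unset Strict Implicit.
Unset Printing Implicit Defensive.
Import Order.TTheory GRing.Theory Num.Theory.
Local Open Scope classical_set_scope.
Local Open Scope ring_scope.

Section Cont.
Variable T : topologicalType.

Definition cont_on (f : RR -> T) (a b : RR) : Prop :=
  forall x, a <= x -> x <= b -> forall U, nbhs (f x) U ->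
  exists2 d : RR, 0 < d & forall y, a <= y -> y <= b -> `|y - x| < d -> U (f y).

Lemma within_cont_on f a b : {within `[a, b], continuous f} -> cont_on f a b.
Proof.
move=> /subspace_continuousP H x ax xb U HU.
have := H x _ U HU; rewrite /= in_itv /= ax xb => /(_ isT). rewrite /= nbhs_simpl /within /=.
move=> /nbhs_ballP [e e0 He]; exists e => // y ay yb xy.
apply: He; last by rewrite /= in_itv /= ay yb.
by rewrite /ball /= distrC.
Qed.

Lemma cont_on_within f a b : cont_on f a b -> {within `[a, b], continuous f}.
Proof.
move=> H; apply/subspace_continuousP => x.
rewrite /= in_itv /= => /andP [ax xb] U HU.
have [e e0 He] := H x ax xb U HU.
rewrite /= nbhs_simpl /within /=; apply/nbhs_ballP; exists e => // y.
rewrite /ball /= => xy; rewrite in_itv /= => /andP [ay yb].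
by apply: He => //; rewrite distrC.
Qed.
End Cont.

Section Cont2.
Variable T : topologicalType.

Lemma cont_on_ext (f g : RR -> T) a b : (forall t, a <= t -> t <= b -> f t = g t) ->
  cont_on f a b -> cont_on g a b.
Proof.
move=> E H x ax xb U; rewrite -E // => /(H x ax xb) [d d0 Hd].
by exists d => // y ay yb yx; rewrite -E //; apply: Hd.
Qed.

Lemma cont_on_glue (f : RR -> T) a c b : a <= c -> c <= b ->
  cont_on f a c -> cont_on f c b -> cont_on f a b.
Proof.
move=> ac cb H1 H2 x ax xb U HU.
have [d1 d10 D1] : exists2 d1 : RR, 0 < d1 &
    forall y, a <= y -> y <= c -> `|y - x| < d1 -> U (f y).
  have [xc|cx] := leP x c.
    have [d d0 Hd] := H1 x ax xc U HU.
    by exists d => // y ay yc yx; apply: Hd.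
  exists (x - c); first by rewrite subr_gt0.
  move=> y ay yc; rewrite ltr_norml => /andP [h1 h2]; exfalso; lra.
have [d2 d20 D2] : exists2 d2 : RR, 0 < d2 &
    forall y, c <= y -> y <= b -> `|y - x| < d2 -> U (f y).
  have [cx|xc] := leP c x.
    have [d d0 Hd] := H2 x cx xb U HU.
    by exists d => // y ay yc yx; apply: Hd.
  exists (c - x); first by rewrite subr_gt0.
  move=> y ay yc; rewrite ltr_norml => /andP [h1 h2]; exfalso; lra.
exists (Num.min d1 d2); first by rewrite lt_min d10 d20.
move=> y ay yb; rewrite lt_min => /andP [y1 y2].
have [yc|cy] := leP y c; first exact: D1.
by apply: D2 => //; apply: ltW.
Qed.

Lemma cont_on_comp (p : RR -> T) (phi : RR -> RR) a b c d :
  cont_on p a b -> cont_on phi c d ->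
  (forall t, c <= t -> t <= d -> a <= phi t /\ phi t <= b) ->
  cont_on (fun t => p (phi t)) c d.
Proof.
move=> Hp Hphi Hm x cx xd U HU.
have [ax xb] := Hm x cx xd.
have [e e0 He] := Hp _ ax xb U HU.
have HV : nbhs (phi x) (fun z : RR => `|z - phi x| < e).
  apply/nbhs_ballP; exists e => // z; rewrite /ball /= distrC //.
have [d' d0 Hd] := Hphi x cx xd _ HV.
exists d' => // y cy yd yx.
have [ay yb] := Hm y cy yd.
by apply: He => //; apply: Hd.
Qed.

Lemma cont_on_cst (z : T) a b : cont_on (fun _ => z) a b.
Proof.
move=> x _ _ U /nbhs_singleton Uz; exists 1 => //.
Qed.
End Cont2.

Lemma cont_on_lip (phi : RR -> RR) (K : RR) a b : 0 <= K ->
  (forall s t, a <= s -> s <= b -> a <= t -> t <= b -> `|phi s - phi t| <= K * `|s - t|) ->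
  cont_on phi a b.
Proof.
move=> K0 HL x ax xb U /nbhs_ballP [e e0 He].
exists (e / (K + 1)); first by apply: divr_gt0 => //; lra.
move=> y ay yb yx; apply: He; rewrite /ball /= distrC.
apply: (le_lt_trans (HL y x ay yb ax xb)).
have K1 : 0 < K + 1 by lra.
have : K * `|y - x| <= K * (e / (K + 1)) by apply: ler_wpM2l => //; apply: ltW.
have : K * (e / (K + 1)) < e.
  have e0' : 0 < e := e0. rewrite mulrA ltr_pdivrMr // mulrDr mulr1 (mulrC e); lra.
move=> h1 h2; exact: (le_lt_trans h2 h1).
Qed.

Lemma cont_on_affine (al be : RR) a b : cont_on (fun t => al * t + be) a b.
Proof.
apply: (@cont_on_lip _ `|al|) => // s t _ _ _ _.
by rewrite opprD addrACA subrr addr0 -mulrBr normrM.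
Qed.

Section Paths.
Variables (T : topologicalType) (le : T -> T -> Prop) (HX : is_pospace le).

Let lerefl : forall x, le x x. Proof. by case: HX. Qed.
Let letrans : forall x y z, le x y -> le y z -> le x z. Proof. by case: HX. Qed.

Lemma dipath_cont p : dipath le p -> cont_on p 0 1.
Proof. by case=> H _; apply: within_cont_on. Qed.

Lemma dipath_cstp x : dipath le (cstp x).
Proof.
split; first by apply: cont_on_within; apply: cont_on_cst.
by move=> *; apply: lerefl.
Qed.

Lemma dipath_pconcat p q : dipath le p -> dipath le q -> p 1 = q 0 ->
  dipath le (pconcat p q).
Proof.
move=> [Cp Mp] [Cq Mq] pq; split.
  apply: cont_on_within; apply: (@cont_on_glue T (pconcat p q) 0 (2^-1) 1).
 1,2: lra.
    apply: (@cont_on_ext T (fun t => p (2 * t + 0))).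
      by move=> t t0 t1; rewrite /pconcat t1 addr0.
    apply: (cont_on_comp (within_cont_on Cp)); first exact: cont_on_affine.
    move=> t t0 t1; lra.
  apply: (@cont_on_ext T (fun t => q (2 * t + -1))).
    move=> t t0 t1; rewrite /pconcat; have [h|h] := leP t 2^-1 => //.
    have -> : t = 2^-1 by apply/eqP; rewrite eq_le h t0.
    have e1 : 2 * 2^-1 = 1 :> RR by lra.
    have e2 : 2 * 2^-1 + -1 = 0 :> RR by lra.
    by rewrite e1 pq; congr q; lra.
  apply: (cont_on_comp (within_cont_on Cq)); first exact: cont_on_affine.
  move=> t t0 t1; lra.
move=> s t s0 st t1; rewrite /pconcat.
have [hs|hs] := leP s 2^-1; have [ht|ht] := leP t 2^-1.
- by apply: Mp; lra.
- apply: (letrans (y := p 1)); first by apply: Mp; lra.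
  by rewrite pq; apply: Mq; lra.
- by exfalso; clear pq; lra.
- by apply: Mq; lra.
Qed.

Lemma dipath_closureP : dipath_closure le.
Proof. split; [exact: dipath_cstp | exact: dipath_pconcat]. Qed.
End Paths.

Ltac ifs := repeat (match goal with |- context [if ?a <= ?b then _ else _] =>
  let h := fresh "h" in have [h|h] := leP a b end; rewrite /=).

Lemma cont_on_pw (T : topologicalType) (f g : RR -> T) a c b : a <= c -> c <= b ->
  cont_on f a c -> cont_on g c b -> f c = g c ->
  cont_on (fun t => if t <= c then f t else g t) a b.
Proof.
move=> ac cb Hf Hg fg; apply: (@cont_on_glue T _ a c b) => //.
  by apply: (cont_on_ext _ Hf) => t _ ->.
apply: (cont_on_ext _ Hg) => t ct _; have [h|h] := leP t c => //.
by have -> : t = c by apply/eqP; rewrite eq_le h ct.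
Qed.

Definition phiR (t : RR) : RR := if t <= 2^-1 then 2 * t else 1.
Definition phiL (t : RR) : RR := if t <= 2^-1 then 0 else 2 * t - 1.
Definition phiA (t : RR) : RR :=
  if t <= 4^-1 then 2 * t else if t <= 2^-1 then t + 4^-1 else (t + 1) / 2.

Lemma cont_affine (al be : RR) a b : cont_on (fun t => al * t + be) a b.
Proof. exact: cont_on_affine. Qed.

Lemma phiR_map : reparam_map phiR.
Proof.
split.
- apply: cont_on_within; apply: (@cont_on_pw _ (fun t => 2 * t) (fun _ => 1) 0 2^-1 1); try lra.
  + by apply: (cont_on_ext (f := fun t => 2 * t + 0)); [move=> t *; rewrite addr0 | exact: cont_affine].
  + by apply: (cont_on_ext (f := fun t => 0 * t + 1)); [move=> t *; rewrite mul0r add0r | exact: cont_affine].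
- rewrite /phiR; ifs; lra.
- rewrite /phiR; ifs; lra.
- move=> s t s0 st t1; rewrite /phiR; ifs; lra.
Qed.

Lemma phiL_map : reparam_map phiL.
Proof.
split.
- apply: cont_on_within; apply: (@cont_on_pw _ (fun _ : RR => 0 : RR) (fun t => 2 * t - 1) 0 2^-1 1); try lra.
  + by apply: (cont_on_ext (f := fun t => 0 * t + 0)); [move=> t *; rewrite mul0r add0r | exact: cont_affine].
  + by apply: (cont_on_ext (f := fun t => 2 * t + (-1))); [move=> t * | exact: cont_affine].
- rewrite /phiL; ifs; lra.
- rewrite /phiL; ifs; lra.
- move=> s t s0 st t1; rewrite /phiL; ifs; lra.
Qed.

Lemma phiA_map : reparam_map phiA.
Proof.
split.
- apply: cont_on_within; apply: (@cont_on_pw _ (fun t => 2 * t) (fun t => if t <= 2^-1 then t + 4^-1 else (t + 1) / 2) 0 4^-1 1); try lra.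
  + by apply: (cont_on_ext (f := fun t => 2 * t + 0)); [move=> t *; rewrite addr0 | exact: cont_affine].
  + apply: (@cont_on_pw _ (fun t => t + 4^-1) (fun t => (t + 1) / 2) 4^-1 2^-1 1); try lra.
    * by apply: (cont_on_ext (f := fun t => 1 * t + (4^-1))); [move=> t *; rewrite mul1r | exact: cont_affine].
    * by apply: (cont_on_ext (f := fun t => (2^-1) * t + (2^-1))); [move=> t *; lra | exact: cont_affine].
  + ifs; lra.
- rewrite /phiA; ifs; lra.
- rewrite /phiA; ifs; lra.
- move=> s t s0 st t1; rewrite /phiA; ifs; lra.
Qed.

Section Tr.
Variable T : topologicalType.

Lemma pconcat_cstR (p : RR -> T) t : 0 <= t -> t <= 1 ->
  pconcat p (cstp (p 1)) t = p (phiR t).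
Proof. by move=> t0 t1; rewrite /pconcat /phiR /cstp; ifs. Qed.

Lemma pconcat_cstL (p : RR -> T) t : 0 <= t -> t <= 1 ->
  pconcat (cstp (p 0)) p t = p (phiL t).
Proof.
move=> t0 t1; rewrite /pconcat /phiL /cstp; ifs => //; congr p; lra.
Qed.

Lemma pconcat_assoc (p q r : RR -> T) t : 0 <= t -> t <= 1 ->
  pconcat (pconcat p q) r t = pconcat p (pconcat q r) (phiA t).
Proof.
move=> t0 t1; rewrite /pconcat /phiA; have [a1|a1] := leP t 4^-1; have [a2|a2] := leP t 2^-1; ifs. all: try (exfalso; lra). all: congr (_ _). all: lra.
Qed.
End Tr.

Ltac rgoal := match goal with
 | |- is_true _ => idtac
 | |- ?a = ?b => let A := type of a in tryif unify A RR then idtac else exfalso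
 | |- False => idtac
 | _ => exfalso end.
Ltac rlra := intros; repeat match goal with |- _ /\ _ => split end; rgoal; repeat (match goal with H : ?a = ?b |- _ =>
  let A := type of a in tryif unify A RR then fail else clear H end); lra.

Lemma reparam_range (phi : RR -> RR) t : reparam_map phi -> 0 <= t -> t <= 1 ->
  0 <= phi t /\ phi t <= 1.
Proof.
case=> _ f0 f1 M t0 t1; split.
  by rewrite -f0; apply: M => //; lra.
by rewrite -[X in _ <= X]f1; apply: M => //; lra.
Qed.

Definition psiL (phi : RR -> RR) (t : RR) : RR := if t <= 2^-1 then phi (2 * t) / 2 else t.
Definition psiR (phi : RR -> RR) (t : RR) : RR := if t <= 2^-1 then t else (phi (2 * t - 1) + 1) / 2.

Lemma psiL_map phi : reparam_map phi -> reparam_map (psiL phi).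
Proof.
move=> Hphi; have R := reparam_range Hphi.
case: Hphi => C f0 f1 M; split.
- apply: cont_on_within; apply: (@cont_on_pw _ (fun t => phi (2 * t) / 2) (fun t => t) 0 2^-1 1); try lra.
  + apply: (cont_on_ext (f := fun t => 2^-1 * (phi (2 * t + 0)) + 0)).
      by move=> t *; rewrite addr0 addr0 mulrC.
    apply: (@cont_on_comp _ (fun z => 2^-1 * z + 0) (fun t => phi (2 * t + 0)) 0 1); first exact: cont_affine; last first.
      move=> t *; have := R (2 * t + 0); lra.
    apply: (cont_on_comp (within_cont_on C)); first exact: cont_affine.
    move=> t *; lra.
  + apply: (cont_on_ext (f := fun t => 1 * t + 0)); last exact: cont_affine.
    by move=> t *; rewrite mul1r addr0.
  + have -> : 2 * 2^-1 = 1 :> RR by lra.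
    rewrite f1; lra.
- rewrite /psiL; ifs; rewrite ?mulr0 ?f0; lra.
- rewrite /psiL; ifs; lra.
- move=> s t s0 st t1; rewrite /psiL; ifs.
  + have := M (2 * s) (2 * t); lra.
  + have := R (2 * s); lra.
  + exfalso; lra.
  + lra.
Qed.

Lemma psiR_map phi : reparam_map phi -> reparam_map (psiR phi).
Proof.
move=> Hphi; have R := reparam_range Hphi.
case: Hphi => C f0 f1 M; split.
- apply: cont_on_within; apply: (@cont_on_pw _ (fun t => t) (fun t => (phi (2 * t - 1) + 1) / 2) 0 2^-1 1); try lra.
  + apply: (cont_on_ext (f := fun t => 1 * t + 0)); last exact: cont_affine.
    by move=> t *; rewrite mul1r addr0.
  + apply: (cont_on_ext (f := fun t => 2^-1 * (phi (2 * t + -1)) + 2^-1)).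
      by move=> t *; rewrite [RHS]mulrDl mul1r [_ * 2^-1]mulrC.
    apply: (@cont_on_comp _ (fun z => 2^-1 * z + 2^-1) (fun t => phi (2 * t + -1)) 0 1); first exact: cont_affine; last first.
      move=> t *; have := R (2 * t + -1); lra.
    apply: (cont_on_comp (within_cont_on C)); first exact: cont_affine.
    move=> t *; lra.
  + have -> : 2 * 2^-1 - 1 = 0 :> RR by lra.
    rewrite f0; lra.
- rewrite /psiR; ifs; lra.
- have e : 2 * 1 - 1 = 1 :> RR by lra.
  rewrite /psiR; ifs; first lra.
  rewrite e f1; lra.
- move=> s t s0 st t1; rewrite /psiR; ifs.
  + lra.
  + have := R (2 * t - 1); lra.
  + exfalso; lra.
  + have := M (2 * s - 1) (2 * t - 1); lra.
Qed.

Section TE.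
Variables (T : topologicalType) (le : T -> T -> Prop) (HX : is_pospace le).
Notation te := (trace_equiv le).

Lemma rs_ends p q : reparam_step le p q -> p 0 = q 0 /\ p 1 = q 1.
Proof.
case=> _ [_ [phi [[_ f0 f1 _] E]]].
by rewrite !E ?f0 ?f1 //; rlra.
Qed.

Lemma te_ends p q : te p q -> p 0 = q 0 /\ p 1 = q 1.
Proof.
elim=> {p q} [p q /rs_ends //|//|p q _ [-> ->] //|p q r _ [-> ->] _ [-> ->] //].
Qed.

Lemma te_trans q p r : te p q -> te q r -> te p r.
Proof. by move=> h1 h2; apply: rst_trans h2. Qed.
Lemma te_sym p q : te p q -> te q p.
Proof. exact: rst_sym. Qed.

Lemma te_idR p : dipath le p -> te p (pconcat p (cstp (p 1))).
Proof.
move=> Hp; apply: rst_step; split => //; split.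
  by apply: dipath_pconcat => //; apply: dipath_cstp.
by exists phiR; split; [exact: phiR_map | exact: pconcat_cstR].
Qed.

Lemma te_idL p : dipath le p -> te p (pconcat (cstp (p 0)) p).
Proof.
move=> Hp; apply: rst_step; split => //; split.
  by apply: dipath_pconcat => //; apply: dipath_cstp.
by exists phiL; split; [exact: phiL_map | exact: pconcat_cstL].
Qed.

Lemma te_assoc p q r : dipath le p -> dipath le q -> dipath le r ->
  p 1 = q 0 -> q 1 = r 0 ->
  te (pconcat p (pconcat q r)) (pconcat (pconcat p q) r).
Proof.
move=> Hp Hq Hr pq qr; apply: rst_step; split; last split.
- apply: dipath_pconcat => //; first by apply: dipath_pconcat.
  by rewrite pconcat0.
- apply: dipath_pconcat => //; first by apply: dipath_pconcat.
  by rewrite pconcat1.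
- by exists phiA; split; [exact: phiA_map | exact: pconcat_assoc].
Qed.

Lemma te_congL q : dipath le q -> forall p p', te p p' -> p 1 = q 0 ->
  te (pconcat p q) (pconcat p' q).
Proof.
move=> Hq p p'; elim=> {p p'}.
- move=> p p' H pq; have [e0 e1] := rs_ends H.
  case: H => Hp [Hp' [phi [Hphi E]]].
  apply: rst_step; split; first exact: dipath_pconcat.
  split; first by apply: dipath_pconcat => //; rewrite -e1.
  exists (psiL phi); split; first exact: psiL_map.
  move=> t t0 t1; rewrite /pconcat /psiL; have [h|h] := leP t 2^-1.
    have := reparam_range Hphi (t := 2 * t); move=> /(_ _ _) [||r0 r1]; try rlra.
    rewrite ifT; last rlra.
    by rewrite E; [congr p; field | rlra | rlra].
  by rewrite ifF //; apply/negbTE; rewrite -ltNge.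
- by move=> *; apply: rst_refl.
- move=> p p' H IH pq; apply: te_sym; apply: IH.
  by have [_ ->] := te_ends H.
- move=> p1 p2 p3 H12 IH12 H23 IH23 pq.
  apply: (te_trans (q := pconcat p2 q)); first exact: IH12.
  by apply: IH23; have [_ <-] := te_ends H12.
Qed.

Lemma te_congR p : dipath le p -> forall q q', te q q' -> p 1 = q 0 ->
  te (pconcat p q) (pconcat p q').
Proof.
move=> Hp q q'; elim=> {q q'}.
- move=> q q' H pq; have [e0 e1] := rs_ends H.
  case: H => Hq [Hq' [phi [Hphi E]]].
  apply: rst_step; split; first exact: dipath_pconcat.
  split; first by apply: dipath_pconcat => //; rewrite -e0.
  exists (psiR phi); split; first exact: psiR_map.
  move=> t t0 t1; rewrite /pconcat /psiR; have [h|h] := leP t 2^-1; first by rewrite h.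
  have := reparam_range Hphi (t := 2 * t - 1); move=> /(_ _ _) [||r0 r1]; try rlra.
  rewrite E; [|rlra|rlra].
  have [h2|h2] := leP ((phi (2 * t - 1) + 1) / 2) 2^-1.
    have z : phi (2 * t - 1) = 0 by rlra.
    have e : 2 * ((0 + 1) / 2) = 1 :> RR by rlra.
    by rewrite z e pq.
  by congr q; field.
- by move=> *; apply: rst_refl.
- move=> q q' H IH pq; apply: te_sym; apply: IH.
  by have [-> _] := te_ends H.
- move=> p1 p2 p3 H12 IH12 H23 IH23 pq.
  apply: (te_trans (q := pconcat p p2)); first exact: IH12.
  by apply: IH23; have [<- _] := te_ends H12.
Qed.

Lemma tclass_eq x y p p' : te p p' -> tclass le x y p = tclass le x y p'.
Proof.
move=> H; apply/funext => r; apply/propext; split.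
  by case=> a b c d; split => //; apply: (te_trans (q := p)) => //; apply: te_sym.
by case=> a b c d; split => //; apply: (te_trans (q := p')).
Qed.
End TE.

Section TL.
Variables (T : topologicalType) (le : T -> T -> Prop) (HX : is_pospace le).
Variable Hc : dipath_closure le.
Notation te := (trace_equiv le).

Lemma Trace_eq x y (u v : Trace le x y) : sval u = sval v -> u = v.
Proof.
case: u => [S hS]; case: v => [S' hS'] /= E; subst S'.
by congr exist; exact: Prop_irrelevance.
Qed.

Lemma trep_te x y (f : Trace le x y) p : sval f = tclass le x y p -> te p (trep f).
Proof.
case: (trepP f) => Hd f0 f1 E H.
have : tclass le x y (trep f) (trep f) by split => //; apply: rst_refl.
by rewrite -E H; case.
Qed.

Lemma Trace_te x y (f g : Trace le x y) : te (trep f) (trep g) -> f = g.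
Proof.
move=> H; apply: Trace_eq.
case: (trepP f) => _ _ _ ->; case: (trepP g) => _ _ _ ->; exact: tclass_eq.
Qed.

Lemma tcomp_te x y z (g : Trace le y z) (f : Trace le x y) :
  te (pconcat (trep f) (trep g)) (trep (tcomp Hc g f)).
Proof. by apply: trep_te. Qed.

Lemma tid_te x : te (cstp x) (trep (tid Hc x)).
Proof. by apply: trep_te. Qed.

Lemma trep_dip x y (f : Trace le x y) : dipath le (trep f).
Proof. by case: (trepP f). Qed.
Lemma trep0 x y (f : Trace le x y) : trep f 0 = x.
Proof. by case: (trepP f). Qed.
Lemma trep1 x y (f : Trace le x y) : trep f 1 = y.
Proof. by case: (trepP f). Qed.

Lemma tcomp_idl x y (f : Trace le x y) : tcomp Hc (tid Hc y) f = f.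
Proof.
apply: Trace_te; apply: te_sym.
apply: (te_trans (q := pconcat (trep f) (cstp y))).
  by have := te_idR HX (trep_dip f); rewrite trep1.
apply: (te_trans (q := pconcat (trep f) (trep (tid Hc y)))); last exact: tcomp_te.
apply: te_congR => //; first exact: trep_dip.
  exact: tid_te.
by rewrite trep1.
Qed.

Lemma tcomp_idr x y (f : Trace le x y) : tcomp Hc f (tid Hc x) = f.
Proof.
apply: Trace_te; apply: te_sym.
apply: (te_trans (q := pconcat (cstp x) (trep f))).
  by have := te_idL HX (trep_dip f); rewrite trep0.
apply: (te_trans (q := pconcat (trep (tid Hc x)) (trep f))); last exact: tcomp_te.
apply: te_congL => //; first exact: trep_dip.
  exact: tid_te.
by rewrite trep0.
Qed.

Lemma tcomp_assoc a b c d (h : Trace le c d) (g : Trace le b c) (f : Trace le a b) :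
  tcomp Hc h (tcomp Hc g f) = tcomp Hc (tcomp Hc h g) f.
Proof.
have df := trep_dip f; have dg := trep_dip g; have dh := trep_dip h.
apply: Trace_te.
apply: (te_trans (q := pconcat (trep (tcomp Hc g f)) (trep h))).
  exact: te_sym (tcomp_te _ _).
apply: (te_trans (q := pconcat (pconcat (trep f) (trep g)) (trep h))).
  apply: te_congL => //; first exact: te_sym (tcomp_te _ _).
  by rewrite trep1 trep0.
apply: (te_trans (q := pconcat (trep f) (pconcat (trep g) (trep h)))).
  by apply: te_sym; apply: te_assoc => //; rewrite ?trep1 ?trep0.
apply: (te_trans (q := pconcat (trep f) (trep (tcomp Hc h g)))); last exact: tcomp_te.
apply: te_congR => //; first exact: tcomp_te.
by rewrite pconcat0 trep1 trep0.
Qed.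

Lemma trace_cat_laws : cat_laws (trace_cat Hc).
Proof.
split.
- by move=> a b f; apply: tcomp_idl.
- by move=> a b f; apply: tcomp_idr.
- by move=> a b c d h g f; apply: tcomp_assoc.
Qed.

Lemma trace_pts x y (u : Trace le x y) : le x y.
Proof.
case: (trepP u) => [[_ M] u0 u1 _]; have := M 0 1; rewrite u0 u1; apply; lra.
Qed.

Lemma loop_tid x (u : Trace le x x) : u = tid Hc x.
Proof.
case: HX => _ Hr _ Ha _.
apply: Trace_te; apply: (te_trans (q := cstp x)); last exact: tid_te.
apply: te_sym; apply: rst_step; split; first exact: dipath_cstp.
split; first exact: trep_dip.
exists id; split.
  split; [|by []|by []|by move=> s t _ st _].
  apply: cont_on_within; apply: (cont_on_ext (f := fun t => 1 * t + 0)); last exact: cont_affine.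
  by move=> *; rewrite mul1r addr0.
case: (trepP u) => [[_ M] u0 u1 _] t t0 t1; rewrite /cstp /=.
apply: Ha.
  by have := M t 1; rewrite u1; apply.
by have := M 0 t; rewrite u0; apply.
Qed.
End TL.

Section CL.
Variables (T : topologicalType) (E : set (T * T)) (cE : closed E).

Lemma CL1 (r : RR -> T) a c : cont_on r 0 1 -> 0 <= a -> a <= 1 ->
  (forall d : RR, 0 < d -> exists t, [/\ 0 <= t, t <= 1, `|t - a| < d & E (r t, c)]) ->
  E (r a, c).
Proof.
move=> Cr a0 a1 H; apply: contrapT => nE.
have oC := closed_openC cE.
have : nbhs (r a, c) (~` E) by rewrite openE in oC; apply: oC.
case=> [[P Q]] /= [Pa Qc] PQ.
have [d d0 Hd] := Cr a a0 a1 P Pa.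
have [t [t0 t1 ta Et]] := H d d0.
apply: (PQ (r t, c)) => //; split => /=; first exact: Hd.
exact: nbhs_singleton.
Qed.

Lemma CL2 (r : RR -> T) a c : cont_on r 0 1 -> 0 <= a -> a <= 1 ->
  (forall d : RR, 0 < d -> exists t, [/\ 0 <= t, t <= 1, `|t - a| < d & E (c, r t)]) ->
  E (c, r a).
Proof.
move=> Cr a0 a1 H; apply: contrapT => nE.
have oC := closed_openC cE.
have : nbhs (c, r a) (~` E) by rewrite openE in oC; apply: oC.
case=> [[P Q]] /= [Pc Qa] PQ.
have [d d0 Hd] := Cr a a0 a1 Q Qa.
have [t [t0 t1 ta Et]] := H d d0.
apply: (PQ (c, r t)) => //; split => /=; last exact: Hd.
exact: nbhs_singleton.
Qed.
End CL.

Section KS.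
Variables (T : topologicalType) (le : T -> T -> Prop) (HX : is_pospace le).
Variables (p q : RR -> T) (Hp : dipath le p) (Hq : dipath le q).
Variable Him : forall s, 0 <= s -> s <= 1 -> exists t, [/\ 0 <= t, t <= 1 & q t = p s].

Let lr : forall x, le x x. Proof. by case: HX. Qed.
Let lt : forall x y z, le x y -> le y z -> le x z. Proof. by case: HX. Qed.
Let la : forall x y, le x y -> le y x -> x = y. Proof. by case: HX. Qed.
Let lc : closed [set xy : T * T | le xy.1 xy.2]. Proof. by case: HX. Qed.
Let Mp : forall s t, 0 <= s -> s <= t -> t <= 1 -> le (p s) (p t). Proof. by case: Hp. Qed.
Let Mq : forall s t, 0 <= s -> s <= t -> t <= 1 -> le (q s) (q t). Proof. by case: Hq. Qed.
Let Cp : cont_on p 0 1. Proof. exact: dipath_cont Hp. Qed.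
Let Cq : cont_on q 0 1. Proof. exact: dipath_cont Hq. Qed.

Definition W s : set RR := [set t | [/\ 0 <= t, t <= 1 & q t = p s]].
Definition g s : RR := inf (W s).

Lemma W_ne s : 0 <= s -> s <= 1 -> W s !=set0.
Proof. by move=> s0 s1; have [t Ht] := Him s0 s1; exists t. Qed.

Lemma W_lb s : has_lbound (W s).
Proof. by exists 0 => t [t0 _ _]. Qed.

Lemma g_le s t : W s t -> g s <= t.
Proof. by move=> Wt; apply: (ge_inf (W_lb s)). Qed.

Lemma g_ge0 s : 0 <= s -> s <= 1 -> 0 <= g s.
Proof. by move=> s0 s1; apply: lb_le_inf; [exact: W_ne | move=> t [t0 _ _]]. Qed.

Lemma g_le1 s : 0 <= s -> s <= 1 -> g s <= 1.
Proof.
move=> s0 s1; have [t Wt] := W_ne s0 s1.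
by apply: le_trans (g_le Wt) _; case: Wt.
Qed.

Lemma g_spec s : 0 <= s -> s <= 1 -> q (g s) = p s.
Proof.
move=> s0 s1; have g0 := g_ge0 s0 s1; have g1 := g_le1 s0 s1.
apply: la.
  have [t Wt] := W_ne s0 s1; have gt := g_le Wt.
  case: Wt => t0 t1 <-; exact: Mq.
apply: (@CL2 _ _ lc q (g s) (p s) Cq g0 g1) => d d0.
have [e We ed] := inf_adherent d0 (conj (W_ne s0 s1) (W_lb s)).
have ge := g_le We.
case: We => e0 e1 qe; exists e; split => //.
  rewrite ger0_norm; [lra | lra].
by rewrite /= qe.
Qed.

Lemma g_mono s s' : 0 <= s -> s <= s' -> s' <= 1 -> g s <= g s'.
Proof.
move=> s0 ss s1.
have s'0 : 0 <= s' by lra.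
have Ss1 : s <= 1 by lra.
apply: lb_le_inf; first exact: W_ne.
move=> t Wt; rewrite leNgt; apply/negP => tg.
suff /g_le h : W s t by rlra.
case: Wt => t0 t1 qt; split => //.
apply: la.
  rewrite -(g_spec s0 Ss1); apply: Mq => //; [lra | exact: g_le1].
rewrite qt; exact: Mp.
Qed.

Lemma g0 : p 0 = q 0 -> g 0 = 0.
Proof.
move=> e0; apply/eqP; rewrite eq_le g_ge0 ?andbT //; try lra.
by apply: g_le; split => //; lra.
Qed.

Definition S (l : RR) : set RR := [set s | [/\ 0 <= s, s <= 1 & s + g s <= 2 * l]].
Definition sig l : RR := sup (S l).
Definition tau l : RR := 2 * l - sig l.

Lemma S_ub l : has_ubound (S l).
Proof. by exists 1 => s [_ s1 _]. Qed.

Lemma S0 l : p 0 = q 0 -> 0 <= l -> S l 0.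
Proof. by move=> e0 l0; split => //; rewrite g0 //; lra. Qed.

Lemma S_sup l s : S l s -> s <= sig l.
Proof. by move=> Ss; apply: (ub_le_sup (S_ub l)). Qed.

Lemma sig_ge0 l : p 0 = q 0 -> 0 <= l -> 0 <= sig l.
Proof. by move=> e0 l0; apply: S_sup; apply: S0. Qed.

Lemma sig_ub l x : p 0 = q 0 -> 0 <= l -> (forall s, S l s -> s <= x) -> sig l <= x.
Proof. by move=> e0 l0 H; apply: ge_sup; [exists 0; exact: S0 | exact: H]. Qed.

Lemma sig_le1 l : p 0 = q 0 -> 0 <= l -> sig l <= 1.
Proof. by move=> e0 l0; apply: sig_ub => // s [] . Qed.

Lemma sig_le2l l : p 0 = q 0 -> 0 <= l -> sig l <= 2 * l.
Proof.
move=> e0 l0; apply: sig_ub => // s [s0 s1 h].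
have := g_ge0 s0 s1; rlra.
Qed.

Lemma sig_ge l : p 0 = q 0 -> 0 <= l -> l <= 1 -> 2 * l - 1 <= sig l.
Proof.
move=> e0 l0 l1; have [h|h] := leP (2 * l - 1) 0.
  by apply: le_trans h _; apply: sig_ge0.
apply: S_sup; split; try rlra.
have := g_le1 (s := 2 * l - 1); rlra.
Qed.

Lemma S_down l s s' : 0 <= s' -> s' <= s -> S l s -> S l s'.
Proof.
move=> s'0 ss [s0 s1 h]; split; try rlra.
have := g_mono s'0 ss s1; rlra.
Qed.

Lemma S_below l s : p 0 = q 0 -> 0 <= l -> 0 <= s -> s < sig l -> S l s.
Proof.
move=> e0 l0 s0 ss.
have hs : has_sup (S l) by split; [exists 0; exact: S0 | exact: S_ub].
have d0 : 0 < sig l - s by rlra.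
have [e Se he] := sup_adherent d0 hs.
move: he; rewrite -/(sig l) => he; apply: (S_down s0 _ Se); rlra.
Qed.

Lemma S_above l s : p 0 = q 0 -> 0 <= l -> s <= 1 -> sig l < s -> 2 * l < s + g s.
Proof.
move=> e0 l0 s1 ss; rewrite ltNge; apply/negP => h.
have s0 : 0 <= s by have := sig_ge0 e0 l0; rlra.
have := @S_sup l s; rewrite /S => /(_ (And3 s0 s1 h)); rlra.
Qed.

Lemma sig_mono l l' : p 0 = q 0 -> 0 <= l -> l <= l' -> sig l <= sig l'.
Proof.
move=> e0 l0 ll; apply: sig_ub => // s [s0 s1 h].
apply: S_sup; split => //; rlra.
Qed.

Lemma sig_lip l l' : p 0 = q 0 -> 0 <= l -> l <= l' -> sig l' <= sig l + 2 * (l' - l).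
Proof.
move=> e0 l0 ll; apply: sig_ub => //; first rlra.
move=> s [s0 s1 h].
have [hs|hs] := leP (s - 2 * (l' - l)) 0.
  have := sig_ge0 e0 l0; rlra.
have hs' : 0 <= s - 2 * (l' - l) by rlra.
have hss : s - 2 * (l' - l) <= s by rlra.
have := g_mono hs' hss s1 => gm.
suff : S l (s - 2 * (l' - l)) by move/S_sup; rlra.
split => //; rlra.
Qed.

Lemma norm_helper (a b c d : RR) : c <= d -> 0 <= b - a -> b - a <= 2 * (d - c) ->
  `|a - b| <= 2 * `|c - d| /\ `|b - a| <= 2 * `|d - c|.
Proof.
move=> cd h1 h2.
suff h : `|b - a| <= 2 * `|d - c| by rewrite (distrC a b) (distrC c d).
rewrite ger0_norm // ger0_norm; rlra.
Qed.

Lemma sig_lip2 s t : p 0 = q 0 -> 0 <= s -> s <= 1 -> 0 <= t -> t <= 1 ->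
  `|sig s - sig t| <= 2 * `|s - t|.
Proof.
move=> e0 s0 s1 t0 t1; have [st|ts] := leP s t.
  have h1 := sig_mono e0 s0 st; have h2 := sig_lip e0 s0 st.
  by case: (@norm_helper (sig s) (sig t) s t st); rlra.
have ts' : t <= s by rlra.
have h1 := sig_mono e0 t0 ts'; have h2 := sig_lip e0 t0 ts'.
by case: (@norm_helper (sig t) (sig s) t s ts'); rlra.
Qed.

Lemma tau_lip2 s t : p 0 = q 0 -> 0 <= s -> s <= 1 -> 0 <= t -> t <= 1 ->
  `|tau s - tau t| <= 2 * `|s - t|.
Proof.
move=> e0 s0 s1 t0 t1; rewrite /tau; have [st|ts] := leP s t.
  have h1 := sig_mono e0 s0 st; have h2 := sig_lip e0 s0 st.
  by case: (@norm_helper (2 * s - sig s) (2 * t - sig t) s t st); rlra.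
have ts' : t <= s by rlra.
have h1 := sig_mono e0 t0 ts'; have h2 := sig_lip e0 t0 ts'.
by case: (@norm_helper (2 * t - sig t) (2 * s - sig s) t s ts'); rlra.
Qed.

Lemma sig_map : p 0 = q 0 -> reparam_map sig.
Proof.
move=> e0; split.
- apply: cont_on_within; apply: (@cont_on_lip _ 2); first rlra.
  by move=> *; apply: sig_lip2.
- have := sig_ge0 e0 (lexx 0); have := sig_le2l e0 (lexx 0); rlra.
- have := sig_le1 e0 ler01; have := sig_ge e0 ler01 (lexx 1); rlra.
- by move=> s t s0 st _; apply: sig_mono.
Qed.

Lemma tau_map : p 0 = q 0 -> reparam_map tau.
Proof.
move=> e0; split.
- apply: cont_on_within; apply: (@cont_on_lip _ 2); first rlra.
  by move=> *; apply: tau_lip2.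
- rewrite /tau; have := sig_ge0 e0 (lexx 0); have := sig_le2l e0 (lexx 0); rlra.
- rewrite /tau; have := sig_le1 e0 ler01; have := sig_ge e0 ler01 (lexx 1); rlra.
- by move=> s t s0 st _; rewrite /tau; have := sig_lip e0 s0 st; rlra.
Qed.

Lemma key l : p 0 = q 0 -> p 1 = q 1 -> 0 <= l -> l <= 1 -> p (sig l) = q (tau l).
Proof.
move=> e0 e1 l0 l1.
have s0 := sig_ge0 e0 l0; have s1 := sig_le1 e0 l0.
have s2 := sig_le2l e0 l0; have s3 := sig_ge e0 l0 l1.
have t0 : 0 <= tau l by rewrite /tau; rlra.
have t1 : tau l <= 1 by rewrite /tau; rlra.
apply: la.
- have [hz|hpos] := leP (sig l) 0.
    have z : sig l = 0 by rlra.
    rewrite z e0; apply: Mq => //.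
  apply: (@CL1 _ _ lc p (sig l) (q (tau l)) Cp s0 s1) => d d0.
  pose s := if d <= sig l then sig l - d / 2 else sig l / 2.
  have sa : 0 <= s /\ s < sig l /\ sig l - s < d.
    by rewrite /s; have [h|h] := leP d (sig l); rlra.
  case: sa => sa0 [sa1 sa2].
  have sg0 := g_ge0 (s := s) sa0 (ltac:(rlra)).
  have gs : g s <= tau l.
    rewrite leNgt; apply/negP => hg.
    pose s'' := if s <= sig l - (g s - tau l) / 2 then sig l - (g s - tau l) / 2 else s.
    have sb : s <= s'' /\ s'' < sig l /\ sig l - s'' <= (g s - tau l) / 2.
      by rewrite /s''; have [h|h] := leP s (sig l - (g s - tau l) / 2); rlra.
    case: sb => sb0 [sb1 sb2].
    have := @S_below l s'' e0 l0 (ltac:(rlra)) sb1 => -[_ _ h].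
    have := g_mono sa0 sb0 (ltac:(rlra)).
    rewrite /tau in hg sb2 *; rlra.
  exists s; split => //; first rlra.
    rewrite ler0_norm; rlra.
  rewrite /= -(g_spec sa0 (ltac:(rlra))); apply: Mq => //.
- have [hz|hpos] := leP 1 (sig l).
    have z : sig l = 1 by rlra.
    rewrite z e1; apply: Mq => //.
  apply: (@CL2 _ _ lc p (sig l) (q (tau l)) Cp s0 s1) => d d0.
  pose s := if d <= 1 - sig l then sig l + d / 2 else (sig l + 1) / 2.
  have sa : sig l < s /\ s <= 1 /\ s - sig l < d.
    by rewrite /s; have [h|h] := leP d (1 - sig l); rlra.
  case: sa => sa0 [sa1 sa2].
  have sz : 0 <= s by rlra.
  have gs : tau l <= g s.
    rewrite leNgt; apply/negP => hg.
    pose s'' := if sig l + (tau l - g s) / 2 <= s then sig l + (tau l - g s) / 2 else s.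
    have sb : s'' <= s /\ sig l < s'' /\ s'' - sig l <= (tau l - g s) / 2.
      by rewrite /s''; have [h|h] := leP (sig l + (tau l - g s) / 2) s; rlra.
    case: sb => sb0 [sb1 sb2].
    have := S_above e0 l0 (ltac:(rlra) : s'' <= 1) sb1.
    have := g_mono (ltac:(rlra) : 0 <= s'') sb0 sa1.
    rewrite /tau in hg sb2 *; rlra.
  exists s; split => //; first by rewrite ger0_norm; rlra.
  rewrite /= -(g_spec sz sa1); apply: Mq => //.
  exact: g_le1.
Qed.

Lemma K_te : p 0 = q 0 -> p 1 = q 1 -> trace_equiv le p q.
Proof.
move=> e0 e1.
have Hr : dipath le (fun l => p (sig l)).
  split.
    apply: cont_on_within; apply: (cont_on_comp Cp).
      apply: (@cont_on_lip _ 2); first rlra.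
      by move=> *; apply: sig_lip2.
    by move=> t t0 t1; split; [apply: sig_ge0 | apply: sig_le1].
  move=> s t s0 st t1; apply: Mp.
  - exact: sig_ge0.
  - exact: sig_mono.
  - apply: sig_le1 => //; rlra.
apply: (@rst_trans _ _ p (fun l => p (sig l)) q).
  apply: rst_step; split => //; split => //.
  by exists sig; split; [exact: sig_map | ].
apply: rst_sym; apply: rst_step; split => //; split => //.
exists tau; split; first exact: tau_map.
by move=> t t0 t1; apply: key.
Qed.
End KS.

Section Img.
Variables (T : topologicalType) (le : T -> T -> Prop) (HX : is_pospace le).
Variable Hc : dipath_closure le.

Definition img (r : RR -> T) : set T :=
  [set z | exists t, [/\ 0 <= t, t <= 1 & r t = z]].

Lemma rs_img p q : reparam_step le p q -> img p = img q.
Proof.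
case=> _ [_ [phi [Hphi E]]].
have R := reparam_range Hphi.
case: (Hphi) => C f0 f1 _.
apply/seteqP; split => z [s [s0 s1 <-]].
  have h : Num.min (phi 0) (phi 1) <= s <= Num.max (phi 0) (phi 1).
    by rewrite f0 f1 (min_l ler01) (max_r ler01) s0 s1.
  have [c] := @IVT RR phi 0 1 s ler01 C h.
  rewrite in_itv /= => /andP [c0 c1] fc.
  by exists c; split => //; rewrite E // fc.
have [r0 r1] := R s s0 s1.
by exists (phi s); split => //; rewrite E.
Qed.

Lemma te_img p q : trace_equiv le p q -> img p = img q.
Proof.
elim=> {p q} [p q /rs_img //|//|p q _ -> //|p q r _ -> _ -> //].
Qed.

Lemma img_pl p q : img p `<=` img (pconcat p q).
Proof.
move=> z [s [s0 s1 <-]]; exists (s / 2); split; try rlra.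
rewrite /pconcat ifT; last rlra.
congr p; rlra.
Qed.

Lemma img_pr p q : p 1 = q 0 -> img q `<=` img (pconcat p q).
Proof.
move=> pq z [s [s0 s1 <-]]; exists ((s + 1) / 2); split; try rlra.
rewrite /pconcat; have [h|h] := leP ((s + 1) / 2) 2^-1.
  have e : 2 * ((s + 1) / 2) = 1 :> RR by rlra.
  have e' : s = 0 by rlra.
  by rewrite e pq e'.
congr q; rlra.
Qed.

Lemma img_psub p q : img (pconcat p q) `<=` img p `|` img q.
Proof.
move=> z [t [t0 t1 <-]]; rewrite /pconcat; have [h|h] := leP t 2^-1.
  by left; exists (2 * t); split => //; rlra.
by right; exists (2 * t - 1); split => //; rlra.
Qed.

Definition timg x y (u : Trace le x y) := img (trep u).

Lemma timg_bounds x y (u : Trace le x y) z : timg u z -> le x z /\ le z y.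
Proof.
case=> t [t0 t1 <-]; case: (trepP u) => [[_ M] u0 u1 _].
split.
  by have := M 0 t; rewrite u0; apply.
by have := M t 1; rewrite u1; apply.
Qed.

Lemma timg_comp x y w (g : Trace le y w) (f : Trace le x y) :
  [/\ timg f `<=` timg (tcomp Hc g f), timg g `<=` timg (tcomp Hc g f) &
      timg (tcomp Hc g f) `<=` timg f `|` timg g].
Proof.
rewrite /timg -(te_img (tcomp_te Hc g f)); split.
- exact: img_pl.
- by apply: img_pr; rewrite trep1 trep0.
- exact: img_psub.
Qed.

Lemma cancel_traces x' x y y' (u u' : Trace le x' x) (F : Trace le x y)
  (v v' : Trace le y y') :
  tcomp Hc v (tcomp Hc F u) = tcomp Hc v' (tcomp Hc F u') -> u = u' /\ v = v'.
Proof.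
move=> H.
case: (HX) => _ _ lt la _.
have xy := trace_pts F.
have sub : forall z, timg (tcomp Hc v (tcomp Hc F u)) z ->
    timg u' z \/ timg F z \/ timg v' z.
  move=> z; rewrite H.
  case: (timg_comp v' (tcomp Hc F u')) => _ _ /[apply] [[|]]; last by right; right.
  by case: (timg_comp F u') => _ _ /[apply] [[|]]; [left | right; left].
have gu : timg u `<=` timg (tcomp Hc v (tcomp Hc F u)).
  move=> z hz; case: (timg_comp v (tcomp Hc F u)) => + _ _; apply.
  by case: (timg_comp F u) => + _ _; apply.
have gv : timg v `<=` timg (tcomp Hc v (tcomp Hc F u)).
  by move=> z hz; case: (timg_comp v (tcomp Hc F u)) => _ + _; apply.
split.
  apply: (Trace_te); apply: (K_te HX (trep_dip u) (trep_dip u')).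
  - move=> s s0 s1.
    have hz : timg u (trep u s) by exists s.
    have [_ zx] := timg_bounds hz.
    suff : timg u' (trep u s) by case=> t [t0 t1 e]; exists t.
    case: (sub _ (gu _ hz)) => [//|[hF|hv]].
      have [xz _] := timg_bounds hF.
      have -> : trep u s = x by apply: la.
      by exists 1; split => //; rewrite trep1.
    have [yz _] := timg_bounds hv.
    have -> : trep u s = x by apply: la => //; apply: lt xy yz.
    by exists 1; split => //; rewrite trep1.
  - by rewrite !trep0.
  - by rewrite !trep1.
apply: (Trace_te); apply: (K_te HX (trep_dip v) (trep_dip v')).
- move=> s s0 s1.
  have hz : timg v (trep v s) by exists s.
  have [yz _] := timg_bounds hz.
  suff : timg v' (trep v s) by case=> t [t0 t1 e]; exists t.
  case: (sub _ (gv _ hz)) => [hu|[hF|//]].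
    have [_ zx] := timg_bounds hu.
    have -> : trep v s = y by apply: la => //; apply: lt zx xy.
    by exists 0; split => //; rewrite trep0.
  have [_ zy] := timg_bounds hF.
  have -> : trep v s = y by apply: la.
  by exists 0; split => //; rewrite trep0.
- by rewrite !trep0.
- by rewrite !trep1.
Qed.
End Img.

Section Main.
Variables (T : topologicalType) (le : T -> T -> Prop) (HX : is_pospace le).
Variable Hc : dipath_closure le.



Lemma trace_le_refl (f : trace Hc) : trace_le f f.
Proof.
case: f => [a [b h]]; exists a, b, (tid Hc a), (tid Hc b) => /=.
by rewrite tcomp_idr // tcomp_idl.
Qed.

Lemma trace_le_trans (f g h : trace Hc) : trace_le f g -> trace_le g h -> trace_le f h.
Proof.
case=> x1 [y1 [u1 [v1 ->]]]; case=> x2 [y2 [u2 [v2 ->]]] /=.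
exists x2, y2, (tcomp Hc u1 u2), (tcomp Hc v2 v1).
by rewrite !tcomp_assoc.
Qed.

Lemma trace_le_anti (f g : trace Hc) : trace_le f g -> trace_le g f -> f = g.
Proof.
case: f => [a [b h]]; case=> x1 [y1 [u1 [v1 ->]]] /=.
case=> x2 [y2 [u2 [v2 E]]] /=.
have ex2 : a = x2 by move: E => /(f_equal (@projT1 _ _)).
have ey2 : b = y2 by move: E => /(f_equal (fun f => projT1 (projT2 f))).
subst x2 y2.
have l1 := trace_pts u1; have l2 := trace_pts u2.
have l3 := trace_pts v1; have l4 := trace_pts v2.
case: (HX) => _ _ _ Ha _.
have ex : x1 = a by apply: Ha.
have ey : y1 = b by apply: Ha.
subst x1 y1.
rewrite (loop_tid HX Hc u1) (loop_tid HX Hc v1) tcomp_idr // tcomp_idl //.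
Qed.

Lemma fhom_sub (f g : arrow (trace_cat Hc)) (a b : fhom f g) : a = b.
Proof.
case: a => [[v u] Ea]; case: b => [[v' u'] Eb] /=.
simpl in Ea, Eb.
have := @cancel_traces T le HX Hc _ _ _ _ u u' (aarr f) v v'.
rewrite Ea Eb => /(_ erefl) [eu ev]; subst u' v'.
by congr exist; exact: Prop_irrelevance.
Qed.

Lemma le_fhom (f g : trace Hc) : trace_le f g ->
  exists uv : Defs.hom (atgt f) (atgt g) * Defs.hom (asrc g) (asrc f),
    Defs.comp uv.1 (Defs.comp (aarr f) uv.2) = aarr g.
Proof.
case=> x1 [y1 [u1 [v1 ->]]] /=.
by exists (v1, u1).
Qed.

Lemma fhom_le (f g : trace Hc) : fhom f g -> trace_le f g.
Proof.
case: g => [a [b h]] [[v u] /= E].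
exists a, b, u, v; move: E; rewrite /aarr /= => <-.
by [].
Qed.
End Main.

Theorem proposition5p3 (T : topologicalType) (le : T -> T -> Prop)
  (HX : is_pospace le) :
  exists (Hc : dipath_closure le)
         (HL : cat_laws (trace_cat Hc))
         (Hr : forall f : trace Hc, trace_le f f)
         (Ht : forall f g h : trace Hc, trace_le f g -> trace_le g h -> trace_le f h),
    (forall f g : trace Hc, trace_le f g -> trace_le g f -> f = g) /\
    cat_iso (thin_cat Hr Ht) (fact_cat HL).
Proof.
have Hc := dipath_closureP HX.
have HL := trace_cat_laws HX Hc.
exists Hc, HL, (@trace_le_refl _ _ HX Hc), (@trace_le_trans _ _ HX Hc).
split; first exact: trace_le_anti.
exists (fun f => f).
exists (fun f g (H : trace_le f g) => (cid (le_fhom H) : fhom f g)).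
split.
- move=> a; exact: fhom_sub.
- move=> a b c g f; exact: fhom_sub.
- by exists (fun f => f).
- move=> a b; exists (@fhom_le _ _ Hc a b).
    by move=> x; exact: Prop_irrelevance.
  by move=> x; exact: fhom_sub.
Qed.
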